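(* Let $K$ be an algebraically closed field of characteristic zero, $\mathcal{K}=K(t)$, $\phi_2(z) := \frac{(t+1)(z-1)}{z+t}$, and let $\alpha \in \mathcal{K}$ satisfy condition $( * )$. Then (A) $\phi_2(\alpha)$ also satisfies $( * )$, and (B) $h(\phi_2(\alpha)) = h(\alpha)+1$.
   Context: Condition $( * )$ on $\beta\in\mathcal{K}$: (i) $\beta$ vanishes at $\mathfrak{p}_{-1}$; (ii) $\beta^2-\beta+t+1$ vanishes at $\mathfrak{p}_{-1}$, and possibly at $\mathfrak{p}_{-3/4}$, but at no other place of $\mathcal{K}$; (iii) if $\beta^2-\beta+t+1$ vanishes at $\mathfrak{p}_{-3/4}$, then $\beta - 1/2$ also vanishes at $\mathfrak{p}_{-3/4}$. Here places of $\mathcal{K}$ are those trivial on $K$, $\mathfrak{p}_c$ is the place at $t=c$, and vanishing means positive valuation. The height $h$ of an element of $K(t)$ is its degree as a rational function in $t$. *)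

(* Defs.v *)
From HB Require Import structures.
From mathcomp Require Import all_boot all_order all_algebra all_field.
Set Implicit Arguments. Unset Strict Implicit. Unset Printing Implicit Defensive.
Import Order.TTheory GRing.Theory Num.Theory.
Local Open Scope ring_scope.

Notation ratf K := {fraction {poly K}}.
Definition tvar (K : fieldType) : ratf K := tofrac 'X.
Definition cst (K : fieldType) (c : K) : ratf K := tofrac c%:P.

(* Places of K(t) trivial on K: [Some c] is p_c (t = c), [None] the place at
   infinity.  (K algebraically closed, so these are all the places.) *)
Definition place (K : fieldType) := option K.

(* x vanishes (has positive valuation) at the place P.  Written with any
   representation x = p/q (q <> 0): v_c(x) = mult_c p - mult_c q,
   v_oo(x) = deg q - deg p; this is independent of the representation. *)
Definition vanishes (K : fieldType) (P : place K) (x : ratf K) : Prop :=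
  exists p q : {poly K}, [/\ q != 0, x = tofrac p / tofrac q &
    (p == 0) || match P with
                | Some c => (mup c q < mup c p)%N
                | None => (size p < size q)%N
                end].

Definition cond_star (K : fieldType) (b : ratf K) : Prop :=
  let pm1 : place K := Some (-1) in
  let pm34 : place K := Some (- (3%:R / 4%:R)) in
  let g := b ^+ 2 - b + tvar K + 1 in
  [/\ vanishes pm1 b,
      vanishes pm1 g,
      (forall P : place K, vanishes P g -> P = pm1 \/ P = pm34) &
      (vanishes pm34 g -> vanishes pm34 (b - cst (2%:R^-1)))].

Definition height_is (K : fieldType) (x : ratf K) (n : nat) : Prop :=
  exists p q : {poly K}, [/\ q != 0, coprimep p q, x = tofrac p / tofrac q &
    n = maxn (size p).-1 (size q).-1].

Definition phi2 (K : fieldType) (z : ratf K) : ratf K :=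
  (tvar K + 1) * (z - 1) / (z + tvar K).

(* Main.v *)
Require Import Defs.
From HB Require Import structures.
From mathcomp Require Import all_boot all_order all_algebra all_field.
From mathcomp Require Import zify ring.
Import GRing.Theory.
Local Open Scope ring_scope.

Lemma fracE' (R : idomainType) (x : {fraction R}) :
  exists n d : R, d != 0 /\ x = tofrac n / tofrac d.
Proof.
elim/quotW: x => x.
exists (\n_x), (\d_x); split; first exact: denom_ratioP.
have hd : tofrac \d_x != 0 :> {fraction R} by rewrite tofrac_eq0 denom_ratioP.
apply: (mulIf hd); rewrite divfK //.
unlock tofrac. rewrite !piE. apply/eqmodP => /=. rewrite equivfE.
rewrite /FracField.mulf /= !numden_Ratio ?mulf_neq0 ?denom_ratioP ?oner_eq0 //.
by rewrite !mulr1 mulrC.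
Qed.

Section Gen.
Variable K : fieldType.

Definition vc (P : place K) (p q : {poly K}) : bool :=
  (p == 0) || match P with
              | Some c => (mup c q < mup c p)%N
              | None => (size p < size q)%N
              end.

Lemma vc_transfer P (p q p' q' : {poly K}) : q != 0 -> q' != 0 ->
  p * q' = p' * q -> vc P p' q' -> vc P p q.
Proof.
move=> hq hq'; rewrite /vc.
have [->|hp'] := eqVneq p' 0 => E.
  by move: E; rewrite mul0r => /eqP; rewrite mulf_eq0 (negbTE hq') orbF => ->.
have hp : p != 0.
  move: hp'; apply: contraNneq => h; move: E; rewrite h mul0r => /esym/eqP.
  by rewrite mulf_eq0 (negbTE hq) orbF.
rewrite (negbTE hp) /=.
case: P => [c|].
  have := congr1 (mup c) E; rewrite !mupM //. lia.
have := congr1 (fun r : {poly K} => size r) E; rewrite /= !size_mul //.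
move: hq hq' hp hp'; rewrite -!size_poly_gt0; move: (size p) (size q) (size p') (size q') => a b c d. lia.
Qed.

Lemma vanE P (p q : {poly K}) : q != 0 ->
  vanishes P (tofrac p / tofrac q) <-> vc P p q.
Proof.
move=> hq; split.
  case=> p' [q'] [hq' E h].
  apply: (@vc_transfer P p q p' q' hq hq' _ h).
  apply/eqP; rewrite -tofrac_eq !tofracM -eqr_div ?tofrac_eq0 //.
  by rewrite E.
by move=> h; exists p, q; split.
Qed.

Lemma root_mup_gt0 (f : {poly K}) c : f != 0 -> root f c -> (0 < mup c f)%N.
Proof. by move=> hf hr; rewrite -XsubC_dvd // dvdp_XsubCl. Qed.

Lemma mup_gt0_root (f : {poly K}) c : (0 < mup c f)%N -> root f c.
Proof. by apply: contraTT => /mupNroot ->. Qed.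

End Gen.
Lemma ring_id (R : comRingType) (p q x : R) :
  ((x + 1) * (p - q)) ^+ 2 - (x + 1) * (p - q) * (p + x * q) + (x + 1) * (p + x * q) ^+ 2
  = (x + 1) ^+ 2 * (p ^+ 2 - p * q + (x + 1) * q ^+ 2).
Proof. ring. Qed.
Lemma galpha_abs (L : fieldType) (a b x : L) : b != 0 ->
  (a / b) ^+ 2 - a / b + x + 1 = (a ^+ 2 - a * b + (x + 1) * b ^+ 2) / b ^+ 2.
Proof. move=> hb. field. by rewrite hb. Qed.
Lemma sub_abs (L : fieldType) (a b k : L) : b != 0 -> a / b - k = (a - k * b) / b.
Proof. move=> hb. field. by rewrite hb. Qed.
Lemma t1 (K : fieldType) (p q : {poly K}) : p + 'X * q = 1 * (p - q) + ('X + 1) * q.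
Proof. ring. Qed.
Lemma phi2_abs (L : fieldType) (a b x : L) : b != 0 -> a + x * b != 0 ->
  (x + 1) * (a / b - 1) / (a / b + x) = (x + 1) * (a - b) / (a + x * b).
Proof.
move=> hb hQ.
have -> : a / b + x = (a + x * b) / b by field.
field. by rewrite hb hQ.
Qed.

Section Main.
Variable K : fieldType.
Local Notation tf := (@tofrac {poly K}).

Lemma phi2E (p q : {poly K}) : q != 0 -> p + 'X * q != 0 ->
  phi2 (tf p / tf q) = tf (('X + 1) * (p - q)) / tf (p + 'X * q).
Proof.
move=> hq hQ.
rewrite /phi2 /tvar phi2_abs ?tofrac_eq0 //; last first.
  by rewrite -tofracM -tofracD tofrac_eq0.
by rewrite tofracM tofracD tofracB tofrac1 tofracD tofracM.
Qed.

Lemma gE (p q : {poly K}) : q != 0 ->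
  (tf p / tf q) ^+ 2 - tf p / tf q + tvar K + 1 =
  tf (p ^+ 2 - p * q + ('X + 1) * q ^+ 2) / tf (q ^+ 2).
Proof.
move=> hq; rewrite /tvar galpha_abs ?tofrac_eq0 //.
rewrite !(tofracD, tofracB, tofracM, tofrac1, tofracXn). rewrite ?tofracN. rewrite !expr2. by rewrite tofracM.
Qed.

Lemma subE (p q : {poly K}) (h : K) : q != 0 ->
  tf p / tf q - cst h = tf (p - h%:P * q) / tf q.
Proof.
move=> hq; rewrite /cst sub_abs ?tofrac_eq0 //.
by rewrite tofracB tofracM.
Qed.
End Main.

Lemma sX1g (R : idomainType) : size ('X + 1 : {poly R}) = 2.
Proof. by rewrite -polyC1 size_XaddC. Qed.
Lemma L1 (R : idomainType) (g : {poly R}) : g != 0 ->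
  size (('X + 1) ^+ 2 * g) = (size g + 2)%N.
Proof.
have h : ('X + 1 : {poly R}) != 0 by rewrite -size_poly_gt0 sX1g.
move=> hg; rewrite size_mul ?expf_neq0 // expr2 size_mul // sX1g /=.
by rewrite addnC.
Qed.
Lemma L2 (R : idomainType) (g : {poly R}) : (size (('X + 1) * g)%R <= (size g).+1)%N.
Proof. by have := size_polyMleq ('X + 1) g; rewrite sX1g. Qed.
Lemma L3 (R : idomainType) (g : {poly R}) : g != 0 -> size (('X + 1) * g) = (size g).+1.
Proof.
have h : ('X + 1 : {poly R}) != 0 by rewrite -size_poly_gt0 sX1g.
by move=> hg; rewrite size_mul // sX1g.
Qed.

Section Star.
Variable K : closedFieldType.
Hypothesis charK0 : [pchar K] =i pred0.
Local Notation tf := (@tofrac {poly K}).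
Variables (p q : {poly K}).
Hypotheses (hq : q != 0) (hcop : coprimep p q) (star : cond_star (tf p / tf q)).

Lemma nat_neq0 n : (n.+1%:R : K) != 0.
Proof. by move/pcharf0P: charK0 => ->. Qed.

Lemma hp1 : root p (-1).
Proof.
case: star => /= s1 _ _ _; move/(vanE _ _ _ _ hq): s1 => /orP [/eqP->|h].
  exact: root0.
by apply: mup_gt0_root; move: h; case: (mup _ p) => //.
Qed.

Lemma hq1 : q.[-1] != 0.
Proof. exact: coprimep_root hcop hp1. Qed.

Lemma hQ1 : (p + 'X * q).[-1] != 0.
Proof.
rewrite !hornerE (eqP hp1) add0r mulN1r oppr_eq0; exact: hq1.
Qed.

Lemma hQ : p + 'X * q != 0.
Proof. by apply/eqP => h; move: hQ1; rewrite h horner0 eqxx. Qed.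


Let G := p ^+ 2 - p * q + ('X + 1) * q ^+ 2.
Let Pn := ('X + 1) * (p - q).
Let Qd := p + 'X * q.

Lemma hq2 : q ^+ 2 != 0. Proof. by rewrite expf_neq0. Qed.
Lemma hQ2 : Qd ^+ 2 != 0. Proof. by rewrite expf_neq0 // hQ. Qed.

Lemma galE : (tf p / tf q) ^+ 2 - tf p / tf q + tvar K + 1 = tf G / tf (q ^+ 2).
Proof. exact: gE. Qed.

Lemma bE : phi2 (tf p / tf q) = tf Pn / tf Qd.
Proof. by rewrite phi2E // hQ. Qed.

Lemma gbE : (tf Pn / tf Qd) ^+ 2 - tf Pn / tf Qd + tvar K + 1 =
  tf (('X + 1) ^+ 2 * G) / tf (Qd ^+ 2).
Proof. by rewrite gE ?hQ // /Pn /G ring_id. Qed.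

Lemma s3' P : vanishes P (tf G / tf (q ^+ 2)) -> P = Some (-1) \/ P = Some (- (3%:R / 4%:R)).
Proof. by case: star => _ _ s3 _; rewrite -galE; apply: s3. Qed.

Lemma hG : G != 0.
Proof.
apply/negP => /eqP h.
have : vanishes None (tf G / tf (q ^+ 2)) by apply/(vanE _ _ _ _ hq2); rewrite /vc h eqxx.
by move/s3' => [].
Qed.

Lemma hN : ('X + 1) ^+ 2 * G != 0.
Proof.
rewrite mulf_neq0 ?hG // expf_neq0 //.
by rewrite -size_poly_gt0 -polyC1 size_XaddC.
Qed.

Lemma GcE c : G.[c] = p.[c] ^+ 2 - p.[c] * q.[c] + (c + 1) * q.[c] ^+ 2.
Proof. by rewrite /G !(hornerD, hornerN, hornerM, horner_exp, hornerX, hornerC, hornerD, hornerE). Qed.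

Lemma gal c : c != -1 -> vanishes (Some c) (tf (('X + 1) ^+ 2 * G) / tf (Qd ^+ 2)) ->
  vanishes (Some c) (tf G / tf (q ^+ 2)).
Proof.
move=> hc /(vanE _ _ _ _ hQ2); rewrite /vc (negbTE hN) /= => hm.
apply/(vanE _ _ _ _ hq2); rewrite /vc (negbTE hG) /=.
have nr : ~~ root (('X + 1) ^+ 2) c.
  rewrite rootE !hornerE expf_eq0 /= addr_eq0; exact: hc.
rewrite (mupMr _ nr) in hm.
have [rq|nrq] := boolP (root q c).
  have pc : p.[c] != 0 by apply: coprimep_root rq; rewrite coprimep_sym.
  have : ~~ root G c.
    rewrite rootE GcE (eqP rq).
    have -> : p.[c] ^+ 2 - p.[c] * 0 + (c + 1) * 0 ^+ 2 = p.[c] ^+ 2 by ring.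
    by rewrite expf_eq0.
  by move/mupNroot => e; rewrite e in hm.
rewrite mupNroot //.
  by move: hm; case: (mup c G).
by rewrite rootE !hornerE expf_eq0 /=.
Qed.

Lemma sX1 : size ('X + 1 : {poly K}) = 2.
Proof. by rewrite -polyC1 size_XaddC. Qed.

Lemma hXq : size ('X * q) = (size q).+1.
Proof. by rewrite mulrC size_mulX. Qed.

Lemma A1 : vanishes (Some (-1)) (phi2 (tf p / tf q)).
Proof.
rewrite bE; apply/(vanE _ _ _ _ hQ); rewrite /vc.
case: eqP => //= hPn.
rewrite (@mupNroot _ (-1) Qd); last by rewrite rootE; exact: hQ1.
apply: root_mup_gt0; first by apply/eqP.
by rewrite rootE /Pn !hornerE addNr mul0r.
Qed.

Lemma A2 : let b := phi2 (tf p / tf q) in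
  vanishes (Some (-1)) (b ^+ 2 - b + tvar K + 1).
Proof.
rewrite /= bE gbE; apply/(vanE _ _ _ _ hQ2); rewrite /vc (negbTE hN) /=.
rewrite (@mupNroot _ (-1) (Qd ^+ 2)); last first.
  by rewrite rootE horner_exp expf_eq0 /=; exact: hQ1.
apply: root_mup_gt0; first exact: hN.
by rewrite rootE hornerM horner_exp !hornerE addNr expr0n /= mul0r.
Qed.

Lemma sizeNQ : (size (Qd ^+ 2)%R <= size (('X + 1) ^+ 2 * G)%R)%N.
Proof.
have hs : ~~ (size G < size (q ^+ 2))%N.
  apply/negP => h.
  have : vanishes None (tf G / tf (q ^+ 2)) by apply/(vanE _ _ _ _ hq2); rewrite /vc h orbT.
  by move/s3' => [].
have e1 : size (q ^+ 2) = ((size q) + (size q)).-1 by rewrite expr2 size_mul.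
have e2 : size (('X + 1) ^+ 2 * G) = (size G + 2)%N.
  exact: L1 hG.
have e3 : size (Qd ^+ 2) = ((size Qd) + (size Qd)).-1 by rewrite expr2 size_mul ?hQ.
have e4 : (size Qd <= maxn (size p) (size q).+1)%N.
  by rewrite /Qd -hXq size_polyD.
have sqp : (0 < size q)%N by rewrite size_poly_gt0.
rewrite e2 e3; move: hs; rewrite e1 => hs.
case: (ltnP (size q).+1 (size p)) => h.
  have hp0 : p != 0 by rewrite -size_poly_gt0; lia.
  have s1 : size (p ^+ 2) = ((size p) + (size p)).-1 by rewrite expr2 size_mul.
  have s2 : (size (- (p * q))%R <= ((size p) + (size q)).-1)%N.
    by rewrite size_polyN size_polyMleq.
  have s3 : size (p ^+ 2 - p * q) = size (p ^+ 2).
    apply: size_polyDl; rewrite s1; move: s2.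
    move: (size (- (p * q))) (size p) (size q) sqp h => a b d; lia.
  have s4 : (size (('X + 1) * q ^+ 2)%R <= (size (q ^+ 2)%R).+1)%N.
    exact: L2.
  have s5 : size G = size (p ^+ 2).
    rewrite /G size_polyDl s3 //; rewrite s1; move: s4; rewrite e1.
    move: (size (('X + 1) * q ^+ 2)) (size p) (size q) sqp h => a b d; lia.
  rewrite s5 s1; move: e4 h sqp.
  move: (size Qd) (size p) (size q) => a b d; lia.
move: e4 h sqp hs.
move: (size Qd) (size p) (size q) (size G) => a b d g; lia.
Qed.

Lemma A3 : let b := phi2 (tf p / tf q) in
  forall P : place K, vanishes P (b ^+ 2 - b + tvar K + 1) ->
  P = Some (-1) \/ P = Some (- (3%:R / 4%:R)).
Proof.
rewrite /= bE gbE => -[c|].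
  case: (eqVneq c (-1)) => [->|hc]; first by left.
  by move/(gal _ hc)/s3'.
move/(vanE _ _ _ _ hQ2); rewrite /vc (negbTE hN) /= => h.
by move: sizeNQ; rewrite leqNgt h.
Qed.

Lemma A4 : let b := phi2 (tf p / tf q) in
  vanishes (Some (- (3%:R / 4%:R))) (b ^+ 2 - b + tvar K + 1) ->
  vanishes (Some (- (3%:R / 4%:R))) (b - cst (2%:R^-1)).
Proof.
rewrite /= bE gbE subE ?hQ //.
have n2 : (2%:R : K) != 0 by exact: nat_neq0.
have n4 : (4%:R : K) != 0 by exact: nat_neq0.
have [c ce] : {c : K | c = - (3%:R / 4%:R)} by eexists.
have [h he] : {h : K | h = 2%:R^-1} by eexists.
rewrite -ce -he.
have ec : c + 1 = (4%:R)^-1 by rewrite ce; field; rewrite ?n2 ?n4 //=.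
have hc : c != -1.
  apply/eqP => e; move: ec; rewrite e addNr => /esym/eqP; rewrite invr_eq0.
  by rewrite (negbTE n4).
have ehc : h + c = - (4%:R)^-1 by rewrite ce he; field; rewrite ?n2 ?n4 //=.
move=> /(gal _ hc) H.
have H2 : vanishes (Some c) (tf p / tf q - cst h).
  by case: star => _ _ _ s4; rewrite ce he; apply: s4; rewrite galE -ce.
move: H2; rewrite subE // => /(vanE _ _ _ _ hq); rewrite /vc => v.
have hr : root (p - h%:P * q) c.
  case/orP: v => [/eqP->|]; first exact: root0.
  by move=> hm; apply: mup_gt0_root; move: hm; case: (mup _ (p - _)).
have pc : p.[c] = h * q.[c].
  by apply/eqP; move: hr; rewrite rootE !hornerE subr_eq0.
have hqc : q.[c] != 0.
  apply/negP => /eqP qc.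
  have rq : root q c by rewrite rootE qc.
  have : p.[c] != 0 by apply: coprimep_root rq; rewrite coprimep_sym.
  by rewrite pc qc mulr0 eqxx.
apply/(vanE _ _ _ _ hQ); rewrite /vc.
case: eqP => //= hne.
rewrite (@mupNroot _ c Qd); last first.
  rewrite rootE /Qd !hornerE pc.
  have -> : h * q.[c] + c * q.[c] = (h + c) * q.[c] by ring.
  by rewrite ehc mulf_eq0 negb_or oppr_eq0 invr_eq0 n4 hqc.
apply: root_mup_gt0; first by apply/eqP.
rewrite rootE /Pn /Qd !hornerE pc; apply/eqP.
rewrite ce he; field; rewrite ?n2 ?n4 //=.
Qed.

Lemma starB : cond_star (phi2 (tf p / tf q)).
Proof. split; [exact: A1 | exact: A2 | exact: A3 | exact: A4]. Qed.

Lemma heightB n : n = maxn (size p).-1 (size q).-1 ->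
  height_is (phi2 (tf p / tf q)) n.+1.
Proof.
move=> hn; exists Pn, Qd; split; [exact: hQ | | exact: bE |].
  have eX : ('X + 1 : {poly K}) = 'X - (-1)%:P by rewrite polyCN polyC1 opprK.
  rewrite /Pn coprimepMl; apply/andP; split.
    rewrite eX coprimep_sym coprimep_XsubC rootE; exact: hQ1.
  rewrite /Qd t1 coprimep_addl_mul coprimepMr; apply/andP; split.
    rewrite eX coprimep_XsubC rootE !hornerE (eqP hp1) add0r oppr_eq0; exact: hq1.
  rewrite coprimep_sym.
  have -> : p - q = (-1) * q + p by rewrite mulN1r addrC.
  by rewrite coprimep_addl_mul coprimep_sym.
have sqp : (0 < size q)%N by rewrite size_poly_gt0.
have e4 : (size Qd <= maxn (size p) (size q).+1)%N.
  by rewrite /Qd -hXq size_polyD.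
case: (leqP (size p) (size q)) => h.
  have eQ : size Qd = (size q).+1.
    by rewrite /Qd addrC size_polyDl hXq //; rewrite ltnS.
  have e5 : (size (p - q)%R <= maxn (size p) (size q))%N.
    by rewrite -(size_polyN q) size_polyD.
  have e6 : (size Pn <= (size (p - q)%R).+1)%N.
    exact: L2.
  rewrite eQ hn; move: e5 e6 h sqp.
  move: (size Pn) (size (p - q)) (size p) (size q) => a b d e; lia.
have e5 : size (p - q) = size p by rewrite size_polyDl // size_polyN.
have hpq : p - q != 0 by rewrite -size_poly_gt0 e5; lia.
have e6 : size Pn = (size p).+1.
  by rewrite /Pn L3 ?e5.
rewrite e6 hn; move: e4 h sqp.
move: (size Qd) (size p) (size q) => a b d; lia.
Qed.

End Star.

Lemma cancel_abs (L : fieldType) (a b k : L) : k != 0 -> (a * k) / (b * k) = a / b.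
Proof.
move=> hk; have [->|hb] := eqVneq b 0; first by rewrite !(mul0r, invr0, mulr0).
field; by rewrite hk hb.
Qed.

Theorem lemma5p14 (K : closedFieldType) (charK0 : [pchar K] =i pred0)
  (alpha : {fraction {poly K}}) :
  cond_star alpha ->
  cond_star (phi2 alpha) /\
  (forall n : nat, height_is alpha n -> height_is (phi2 alpha) n.+1).
Proof.
move=> star; split.
  have [n [d [hd E]]] := fracE' _ alpha.
  set g := gcdp n d.
  have hg : g != 0 by rewrite gcdp_eq0 negb_and hd orbT.
  have En : n = n %/ g * g by rewrite divpK // dvdp_gcdl.
  have Ed : d = d %/ g * g by rewrite divpK // dvdp_gcdr.
  have hq : d %/ g != 0.
    by apply: contraNneq hd => h; rewrite Ed h mul0r.
  have hcop : coprimep (n %/ g) (d %/ g) by rewrite coprimep_div_gcd // hd orbT.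
  have E' : alpha = tofrac (n %/ g) / tofrac (d %/ g).
    by rewrite E {1}En {1}Ed !tofracM cancel_abs // tofrac_eq0.
  rewrite E' in star *.
  exact (@starB K charK0 _ _ hq hcop star).
move=> n [p [q [hq hcop E ->]]].
rewrite E in star *.
exact (@heightB K _ _ hq hcop star _ erefl).
Qed.
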